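(* Let $V$ be any finite set of points in $\mathbb{R}^m$ with $|V|\ge 2$, and let $T$ be any tree produced by the bisecting $k$-means algorithm on $V$. Then $T$ is a constant-factor approximation for the Hierarchical-Revenue objective: there is an absolute constant $\gamma>0$ (one may take $\gamma=\tfrac{1}{35}$), independent of $V$ and $m$, such that $rev_T(V)\ \ge\ \gamma\cdot \max_{T'} rev_{T'}(V)$, where the maximum is over all hierarchical clustering trees $T'$ on $V$.
   Context: Distances are Euclidean: $d(x,y)=\|x-y\|_2$. For a finite nonempty $S\subset\mathbb{R}^m$, $\rho(S)=\frac{1}{|S|}\sum_{u\in S}u$ is its centroid and $\Delta_1(S)=\sum_{u\in S}d(u,\rho(S))^2$. A partition $(S_1,S_2)$ of a finite set $S$ ($|S|\ge2$) into two nonempty sets is an optimal 2-means partition if it minimizes $\Delta_1(S_1)+\Delta_1(S_2)$ over all such partitions. A hierarchical clustering tree $T$ on $V$ is a rooted binary tree (each internal node has exactly two children) whose leaves are in bijection with $V$; each node is identified with the set of points at the leaves of its subtree. If an internal node has set $S$ and its children have sets $S_1,S_2$, we call this a split and write $S\to(S_1,S_2)\in T$. The bisecting $k$-means algorithm builds $T$ top-down: starting from the root set $V$, every set $S$ with $|S|\ge 2$ is split into an optimal 2-means partition $(S_1,S_2)$ of $S$, recursively, until all sets are singletons. Revenue: for a split $S\to(S_1,S_2)$ and $i\in S_1$, $j\in S_2$, let $\delta_{S_1,S_2}(i,j)=\max\{d(i,\rho(S_1)),d(j,\rho(S_2))\}$ and $rev(i,j)=\min\{d(i,j)/\delta_{S_1,S_2}(i,j),\,1\}$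 (with $rev(i,j)=1$ if $\delta_{S_1,S_2}(i,j)=0$). Let $rev(S_1,S_2)=\sum_{i\in S_1}\sum_{j\in S_2}rev(i,j)$. The Hierarchical-Revenue of $T$ is $rev_T(V)=\sum_{S\to(S_1,S_2)\in T}rev(S_1,S_2)$, i.e. the sum over all unordered pairs $\{i,j\}\subseteq V$ of $rev(i,j)$ computed at the split where $i$ and $j$ are first separated. *)

(* Defs.v *)
From HB Require Import structures.
From mathcomp Require Import all_boot all_order all_algebra.
From mathcomp Require Import reals.
Set Implicit Arguments. Unset Strict Implicit. Unset Printing Implicit Defensive.
Import Order.TTheory GRing.Theory Num.Theory.
Local Open Scope ring_scope.

Section Defs.
Variables (R : realType) (m : nat).
Notation point := 'rV[R]_m.

Definition dist (x y : point) : R :=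
  Num.sqrt (\sum_(k < m) (x ord0 k - y ord0 k) ^+ 2).

(* A finite set of points is represented by a duplicate-free sequence;
   a subset of a finite set is a subsequence (up to permutation). *)
Definition centroid (S : seq point) : point :=
  (size S)%:R^-1 *: \sum_(u <- S) u.

Definition Delta1 (S : seq point) : R :=
  \sum_(u <- S) (dist u (centroid S)) ^+ 2.

Definition is_2partition (S S1 S2 : seq point) : Prop :=
  perm_eq (S1 ++ S2) S /\ S1 != [::] /\ S2 != [::].

Definition optimal_2means (S S1 S2 : seq point) : Prop :=
  is_2partition S S1 S2 /\
  forall A B : seq point, is_2partition S A B ->
    Delta1 S1 + Delta1 S2 <= Delta1 A + Delta1 B.

Inductive htree : Type :=
| Leaf of point
| Node of htree & htree.

Fixpoint leaves (t : htree) : seq point :=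
  match t with
  | Leaf x => [:: x]
  | Node l r => leaves l ++ leaves r
  end.

Definition is_hc_tree (V : seq point) (t : htree) : Prop :=
  perm_eq (leaves t) V.

(* every split S -> (S1,S2) of t is an optimal 2-means partition of S:
   t is a possible output of the bisecting k-means algorithm *)
Fixpoint bisecting_kmeans_tree (t : htree) : Prop :=
  match t with
  | Leaf _ => True
  | Node l r =>
      optimal_2means (leaves l ++ leaves r) (leaves l) (leaves r) /\
      bisecting_kmeans_tree l /\ bisecting_kmeans_tree r
  end.

Definition rev_pair (S1 S2 : seq point) (i j : point) : R :=
  let delta := Num.max (dist i (centroid S1)) (dist j (centroid S2)) in
  if delta == 0 then 1 else Num.min (dist i j / delta) 1.

Definition rev_split (S1 S2 : seq point) : R :=
  \sum_(i <- S1) \sum_(j <- S2) rev_pair S1 S2 i j.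

Fixpoint hrev (t : htree) : R :=
  match t with
  | Leaf _ => 0
  | Node l r => rev_split (leaves l) (leaves r) + hrev l + hrev r
  end.

End Defs.

(* Main.v *)
Require Import Defs.
From HB Require Import structures.
From mathcomp Require Import all_boot all_order all_algebra.
From mathcomp Require Import reals.
From mathcomp Require Import ring lra.
Import Order.TTheory GRing.Theory Num.Theory.
Local Open Scope ring_scope.
Set Implicit Arguments. Unset Strict Implicit.



Section Geo.
Variables (R : realType) (m : nat).
Notation point := 'rV[R]_m.

Definition d2 (x y : point) : R := \sum_(k < m) (x ord0 k - y ord0 k) ^+ 2.

Lemma d2_ge0 (x y : point) : 0 <= d2 x y.
Proof. by apply: sumr_ge0 => i _; rewrite sqr_ge0. Qed.

Lemma dist_ge0 (x y : point) : 0 <= dist x y.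
Proof. exact: sqrtr_ge0. Qed.

Lemma dist_sqr (x y : point) : dist x y ^+ 2 = d2 x y.
Proof. by rewrite /dist sqr_sqrtr // d2_ge0. Qed.

Lemma d2C (x y : point) : d2 x y = d2 y x.
Proof. by apply: eq_bigr => i _; rewrite -sqrrN opprB. Qed.

Lemma distC (x y : point) : dist x y = dist y x.
Proof. by rewrite /dist; have := d2C x y; rewrite /d2 => ->. Qed.

Lemma sum_cst (A : seq point) (c : R) : \sum_(u <- A) c = (size A)%:R * c.
Proof.
elim: A => [|a A IH]; first by rewrite big_nil mul0r.
by rewrite big_cons IH /= -[(size A).+1]add1n natrD mulrDl mul1r.
Qed.

Lemma centroidE (A : seq point) i : centroid A ord0 i = (size A)%:R^-1 * \sum_(u <- A) u ord0 i.
Proof. by rewrite /centroid mxE summxE. Qed.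

Lemma pa1 (A : seq point) (f : point -> R) p : A != [::] ->
  \sum_(u <- A) (f u - p) ^+ 2 =
  \sum_(u <- A) (f u - (size A)%:R^-1 * \sum_(u <- A) f u) ^+ 2 +
  (size A)%:R * ((size A)%:R^-1 * \sum_(u <- A) f u - p) ^+ 2.
Proof.
move=> An.
have n0 : (size A)%:R != 0 :> R by rewrite pnatr_eq0 size_eq0.
set S := \sum_(u <- A) f u.
set c := _ * S.
have Sc : S = (size A)%:R * c by rewrite /c mulrA mulfV // mul1r.
rewrite (eq_bigr (fun u => (f u - c) ^+ 2 + ((c - p) * 2 * f u - (c - p) * (p + c))));
  last by move=> u _; ring.
rewrite big_split /= sumrB -mulr_sumr -/S sum_cst Sc; ring.
Qed.

Lemma pa (A : seq point) p : A != [::] ->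
  \sum_(u <- A) d2 u p =
  \sum_(u <- A) d2 u (centroid A) + (size A)%:R * d2 (centroid A) p.
Proof.
move=> An; rewrite /d2 exchange_big mulr_sumr [X in _ = X + _]exchange_big -big_split.
apply: eq_bigr => i _ /=; rewrite centroidE.
exact: (pa1 (fun u : point => u ord0 i) (p ord0 i) An).
Qed.

Lemma Delta1E (A : seq point) : Delta1 A = \sum_(u <- A) d2 u (centroid A).
Proof. by apply: eq_bigr => u _; rewrite dist_sqr. Qed.

Lemma pa_ge (A : seq point) p : A != [::] ->
  Delta1 A <= \sum_(u <- A) d2 u p.
Proof.
move=> An; rewrite (pa p An) Delta1E lerDl; apply: mulr_ge0 => //; exact: d2_ge0.
Qed.

End Geo.


Section Geo2.
Variables (R : realType) (m : nat).
Notation point := 'rV[R]_m.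

Lemma cs (f g : 'I_m -> R) :
  (\sum_i f i * g i) ^+ 2 <= (\sum_i f i ^+ 2) * (\sum_i g i ^+ 2).
Proof.
have H : 0 <= \sum_i \sum_j (f i * g j - f j * g i) ^+ 2.
  by apply: sumr_ge0 => i _; apply: sumr_ge0 => j _; rewrite sqr_ge0.
have E : \sum_i \sum_j (f i * g j - f j * g i) ^+ 2 =
   \sum_i (f i ^+ 2 * \sum_j g j ^+ 2 + g i ^+ 2 * \sum_j f j ^+ 2
           - 2 * (f i * g i) * \sum_j f j * g j).
  apply: eq_bigr => i _; rewrite !mulr_sumr -big_split -sumrB /=.
  by apply: eq_bigr => j _; ring.
rewrite E sumrB big_split /= -!mulr_suml in H.
rewrite -subr_ge0; move: H; rewrite -mulr_sumr; lra.
Qed.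

Lemma minkowski (f g : 'I_m -> R) :
  Num.sqrt (\sum_i (f i + g i) ^+ 2) <=
  Num.sqrt (\sum_i f i ^+ 2) + Num.sqrt (\sum_i g i ^+ 2).
Proof.
set A := \sum_i f i ^+ 2; set B := \sum_i g i ^+ 2; set C := \sum_i f i * g i.
have A0 : 0 <= A by apply: sumr_ge0 => i _; rewrite sqr_ge0.
have B0 : 0 <= B by apply: sumr_ge0 => i _; rewrite sqr_ge0.
have E : \sum_i (f i + g i) ^+ 2 = A + B + 2 * C.
  rewrite /A /B /C mulr_sumr -!big_split /=; apply: eq_bigr => i _; ring.
have HC : C <= Num.sqrt A * Num.sqrt B.
  have := cs f g; rewrite -/A -/B -/C => h.
  have : `|C| <= Num.sqrt (A * B).
    by rewrite -(sqrtr_sqr C) ler_wsqrtr.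
  rewrite sqrtrM //; apply: le_trans; exact: ler_norm.
rewrite E -[X in _ <= X]ger0_norm ?addr_ge0 ?sqrtr_ge0 // -sqrtr_sqr.
apply: ler_wsqrtr.
rewrite sqrrD !sqr_sqrtr //; lra.
Qed.

Lemma dist_tri (x y z : point) : dist x z <= dist x y + dist y z.
Proof.
have := minkowski (fun k => x ord0 k - y ord0 k) (fun k => y ord0 k - z ord0 k).
rewrite /dist /=.
by under eq_bigr do rewrite addrA subrK.
Qed.

End Geo2.


Section Move.
Variables (R : realType) (m : nat).
Notation point := 'rV[R]_m.

Lemma centroid_perm (A B : seq point) : perm_eq A B -> centroid A = centroid B.
Proof. by move=> pAB; rewrite /centroid (perm_size pAB) (perm_big _ pAB). Qed.

Lemma d2xx (x : point) : d2 x x = 0.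
Proof. by rewrite /d2 big1 // => i _; rewrite subrr expr0n. Qed.

Lemma key_rel (M K : seq point) (c1 : point) : M != [::] -> K != [::] ->
  c1 = centroid (M ++ K) ->
  (size K)%:R ^+ 2 * d2 (centroid K) c1 = (size M)%:R ^+ 2 * d2 (centroid M) c1.
Proof.
move=> Mn Kn ->.
have k0 : (size M)%:R != 0 :> R by rewrite pnatr_eq0 size_eq0.
have K0 : (size K)%:R != 0 :> R by rewrite pnatr_eq0 size_eq0.
have kK0 : (size M)%:R + (size K)%:R != 0 :> R.
  by rewrite -natrD pnatr_eq0 addn_eq0 !size_eq0 negb_and Mn.
rewrite /d2 !mulr_sumr; apply: eq_bigr => i _.
rewrite !centroidE size_cat big_cat natrD /=.
set a := \sum_(u <- K) _; set b := \sum_(u <- M) _; set p := (size M)%:R; set q := (size K)%:R. rewrite -/a -/b. field; by rewrite kK0 k0 K0.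
Qed.

Lemma move_ineq (S S1 S2 : seq point) (P : pred point) :
  optimal_2means S S1 S2 -> filter P S1 != [::] ->
  (size S1)%:R * d2 (centroid (filter P S1)) (centroid S1) <=
  (size (filter (predC P) S1))%:R * d2 (centroid (filter P S1)) (centroid S2).
Proof.
move=> [[pS [S1n S2n]] opt] Mn.
set M := filter P S1; set K := filter (predC P) S1.
have pK : perm_eq (M ++ K) S1 by rewrite /M /K perm_filterC.
have szS1 : size S1 = (size M + size K)%N by rewrite -(perm_size pK) size_cat.
case: (eqVneq K [::]) => Kn.
  have pM : perm_eq M S1 by move: pK; rewrite Kn cats0.
  rewrite (centroid_perm pM) d2xx mulr0; apply: mulr_ge0 => //; exact: d2_ge0.
have part : is_2partition S K (S2 ++ M).
  split; last by split => //; case: (S2) S2n.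
  apply: perm_trans pS.
  apply: (@perm_trans _ (M ++ (K ++ S2))); first by rewrite catA perm_catC.
  by rewrite catA perm_cat2r.
have Hopt := opt K (S2 ++ M) part.
have E1 : Delta1 S1 = \sum_(u <- M) d2 u (centroid S1) + \sum_(u <- K) d2 u (centroid S1).
  by rewrite Delta1E -(perm_big _ pK) big_cat.
have E2 : Delta1 (S2 ++ M) <= Delta1 S2 + \sum_(u <- M) d2 u (centroid S2).
  apply: le_trans (pa_ge (centroid S2) _) _; first by case: (S2) S2n.
  by rewrite big_cat Delta1E.
have E3 := pa (centroid S1) Kn; rewrite -Delta1E in E3.
have E4 := pa (centroid S1) Mn.
have E5 := pa (centroid S2) Mn.
have c1E : centroid S1 = centroid (M ++ K) by rewrite (centroid_perm pK).
have Hk := key_rel Mn Kn c1E.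
rewrite szS1 natrD.
have k0 : 0 < (size M)%:R :> R by rewrite ltr0n lt0n size_eq0.
have K0 : 0 < (size K)%:R :> R by rewrite ltr0n lt0n size_eq0.
set k := (size M)%:R in Hk E4 E5 k0 *; set KK := (size K)%:R in Hk E3 K0 *.
set X := d2 (centroid K) _ in Hk E3.
set Y := d2 (centroid M) (centroid S1) in Hk E4 *.
set Z := d2 (centroid M) (centroid S2) in E5 *.
have X0 : 0 <= X by exact: d2_ge0.
have Hl : KK * X + k * Y <= k * Z by lra.
have : k * ((k + KK) * Y - KK * Z) <= 0 by nra.
rewrite pmulr_rle0 // subr_le0 //.
Qed.

End Move.


Section Cnt.
Variables (R : realType) (m : nat).
Notation point := 'rV[R]_m.

Lemma opt_sym (S S1 S2 : seq point) : optimal_2means S S1 S2 -> optimal_2means S S2 S1.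
Proof.
move=> [[pS [n1 n2]] opt]; split.
  by split => //; apply: perm_trans pS; rewrite perm_catC.
move=> A B [pAB [nA nB]]; rewrite addrC [X in _ <= X]addrC; apply: opt.
by split => //; apply: perm_trans pAB; rewrite perm_catC.
Qed.


Lemma centroid_const (A : seq point) x : A != [::] ->
  (forall u, u \in A -> u = x) -> centroid A = x.
Proof.
move=> An Ax; apply/matrixP => i j; rewrite (ord1 i) centroidE.
rewrite (eq_big_seq (fun _ => x ord0 j)); last by move=> u /Ax ->.
have n0 : (size A)%:R != 0 :> R by rewrite pnatr_eq0 size_eq0.
by rewrite sum_cst mulrA mulVf // mul1r.
Qed.

Lemma voronoi (S S1 S2 : seq point) x : optimal_2means S S1 S2 -> x \in S1 ->
  dist x (centroid S1) <= dist x (centroid S2).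
Proof.
move=> opt xS.
have Mn : filter (pred1 x) S1 != [::].
  by rewrite -size_eq0 size_filter -lt0n -has_count; apply/hasP; exists x => /=.
have := move_ineq opt Mn.
rewrite (@centroid_const _ x Mn); last by move=> u; rewrite mem_filter => /andP[/eqP].
move=> h; rewrite /dist ler_sqrt ?d2_ge0 //.
have n0 : 0 < (size S1)%:R :> R by rewrite ltr0n lt0n size_eq0; case: (S1) xS.
have hK : (size (filter (predC (pred1 x)) S1))%:R <= (size S1)%:R :> R.
  by rewrite ler_nat size_filter count_size.
have h2 := d2_ge0 x (centroid S2).
have h1 := d2_ge0 x (centroid S1).
change (d2 x (centroid S1) <= d2 x (centroid S2)). nra.
Qed.

Lemma ltr_sum_seq (A : seq point) (f g : point -> R) : A != [::] ->
  (forall u, u \in A -> f u < g u) -> \sum_(u <- A) f u < \sum_(u <- A) g u.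
Proof.
move=> An H; rewrite big_seq [X in _ < X]big_seq; apply: ltr_sum => //.
by case: A An H => // a A _ _ /=; rewrite inE eqxx.
Qed.

Lemma sq_lt (u v : R) : 0 <= u -> 0 <= v -> u ^+ 2 < v ^+ 2 -> u < v.
Proof. move=> u0 v0 h; rewrite ltNge; apply/negP => hv; nra. Qed.

Lemma sq_ltm (u v : R) : 0 <= u -> u < v -> u ^+ 2 < v ^+ 2.
Proof. move=> u0 h; nra. Qed.

Lemma sq_lem (u v : R) : 0 <= u -> u <= v -> u ^+ 2 <= v ^+ 2.
Proof. move=> u0 h; nra. Qed.

Definition gam : R := (10%:R)^-1.

Lemma count_bound (S S1 S2 : seq point) x : optimal_2means S S1 S2 -> x \in S1 ->
  121%:R * (size (filter (fun y => dist x y < gam * dist x (centroid S1)) S2))%:R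
  <= 40%:R * (size S2)%:R :> R.
Proof.
move=> opt xS.
set P := (fun y => _); set M := filter P S2.
case: (eqVneq M [::]) => Mn.
  by rewrite Mn /= mulr0; apply: mulr_ge0.
set a := dist x (centroid S1).
set mu := centroid M.
have vor := voronoi opt xS.
have hmove := move_ineq (opt_sym opt) Mn.
rewrite -/M -/mu in hmove.
have hxmu : dist x mu < gam * a.
  have hk : 0 < (size M)%:R :> R by rewrite ltr0n lt0n size_eq0.
  have hpa := pa x Mn; rewrite -/mu in hpa.
  have hs : \sum_(u <- M) d2 u x < \sum_(u <- M) (gam * a) ^+ 2.
    apply: ltr_sum_seq => // u; rewrite mem_filter => /andP[Pu _].
    rewrite d2C -dist_sqr; apply: sq_ltm => //; exact: dist_ge0.
  rewrite sum_cst in hs.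
  have h0 : 0 <= \sum_(u <- M) d2 u mu by apply: sumr_ge0 => u _; apply: d2_ge0.
  apply: sq_lt; [exact: dist_ge0| by rewrite mulr_ge0 ?dist_ge0 // invr_ge0 |].
  rewrite dist_sqr d2C.
  set D := d2 mu x in hpa *; set s := (size M)%:R in hs hk hpa.
  nra.
have a0 : 0 < a.
  have [y] : exists y, y \in M.
    by move: Mn; case: (M) => // y s _; exists y; exact: mem_head.
  rewrite mem_filter /P => /andP[hy _].
  have a0' : 0 <= a by apply: dist_ge0.
  rewrite lt_neqAle a0' andbT; apply/eqP => a0; rewrite -/a -a0 mulr0 in hy.
  have := dist_ge0 x y; lra.
have h1 : (1 - gam) * a < dist mu (centroid S2).
  have := dist_tri x mu (centroid S2); rewrite -/a in vor; lra.
have h2 : dist mu (centroid S1) < (1 + gam) * a.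
  have := dist_tri mu x (centroid S1); rewrite (distC mu x) -/a; lra.
rewrite -!dist_sqr in hmove.
have szS2 : size S2 = (size M + size (filter (predC P) S2))%N.
  by rewrite /M !size_filter count_predC.
rewrite szS2 natrD.
set k := (size M)%:R; set K := (size (filter (predC P) S2))%:R in hmove *.
have k0 : 0 <= k by [].
have K0 : 0 <= K by [].
rewrite szS2 natrD -/k -/K in hmove.
set u := dist mu (centroid S2) in h1 hmove; set v := dist mu (centroid S1) in h2 hmove.
have u0 : 0 <= u by apply: dist_ge0.
have v0 : 0 <= v by apply: dist_ge0.
rewrite /gam in h1 h2.
have e1 : (9%:R / 10%:R * a) ^+ 2 < u ^+ 2.
  apply: sq_ltm; lra.
have e2 : v ^+ 2 <= (11%:R / 10%:R * a) ^+ 2.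
  apply: sq_lem; lra.
have e3 : (k + K) * (9%:R / 10%:R * a) ^+ 2 <= K * (11%:R / 10%:R * a) ^+ 2.
  nra.
nra.
Qed.

End Cnt.


Section Rev.
Variables (R : realType) (m : nat).
Notation point := 'rV[R]_m.
Local Notation gam := (gam R).
Definition ind (b : bool) : R := (b : nat)%:R.

Lemma rev_ge0 (S1 S2 : seq point) (i j : point) : 0 <= rev_pair S1 S2 i j.
Proof.
rewrite /rev_pair; case: ifP => // _.
rewrite le_min ler01 andbT divr_ge0 ?dist_ge0 //.
by rewrite le_max dist_ge0.
Qed.

Lemma rev_le1 (S1 S2 : seq point) (i j : point) : rev_pair S1 S2 i j <= 1.
Proof. by rewrite /rev_pair; case: ifP => // _; rewrite ge_min lexx orbT. Qed.

Lemma rev_lb (S1 S2 : seq point) (i j : point) :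
  gam - gam * ind (dist i j < gam * dist i (centroid S1))
      - gam * ind (dist i j < gam * dist j (centroid S2)) <= rev_pair S1 S2 i j.
Proof.
have g0 : 0 < gam :> R by rewrite /gam invr_gt0 ltr0n.
have g1 : gam <= 1 :> R by rewrite /gam invf_le1 ?ler1n ?ltr0n.
rewrite /ind; case: ltP => hA.
  rewrite [((true:nat)%:R)]/= mulr1; apply: le_trans (rev_ge0 _ _ _ _).
  have : 0 <= gam * ind (dist i j < gam * dist j (centroid S2)) :> R.
    by apply: mulr_ge0; [apply: ltW | rewrite /ind ler0n].
  lra.
case: ltP => hB.
  rewrite [((true:nat)%:R)]/= [((false:nat)%:R)]/= mulr1 mulr0; apply: le_trans (rev_ge0 _ _ _ _); lra.
rewrite [((false:nat)%:R)]/=.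
rewrite !mulr0 !subr0 /rev_pair; case: ifP => [_|/eqP d0]; first by [].
set a := dist i _ in hA *; set b := dist j _ in hB *.
have dpos : 0 < Num.max a b.
  by rewrite lt_neqAle eq_sym; apply/andP; split; [apply/eqP|rewrite le_max dist_ge0].
rewrite le_min g1 andbT ler_pdivlMr //.
by rewrite /Num.max /Order.max; case: ifP.
Qed.

Lemma sum_ind (s : seq point) (P : pred point) :
  \sum_(j <- s) ind (P j) = (size (filter P s))%:R :> R.
Proof.
elim: s => [|a s IH]; first by rewrite big_nil.
rewrite big_cons IH /=; case: (P a) => /=; rewrite /ind /=; [by rewrite -[(size _).+1]add1n natrD | by rewrite add0r].
Qed.

Lemma sum_bound (s : seq point) (f : point -> R) (c : R) :
  (forall i, i \in s -> f i <= c) -> \sum_(i <- s) f i <= (size s)%:R * c.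
Proof.
move=> H; rewrite -sum_cst big_seq [X in _ <= X]big_seq; exact: ler_sum.
Qed.

Lemma sum_sub3 (s : seq point) (c : R) (f g : point -> R) :
  \sum_(i <- s) (c - f i - g i) = (size s)%:R * c - \sum_(i <- s) f i - \sum_(i <- s) g i.
Proof. by rewrite !sumrB sum_cst. Qed.

Lemma rev_split_lb (S S1 S2 : seq point) : optimal_2means S S1 S2 ->
  41%:R * ((size S1)%:R * (size S2)%:R) <= 1210%:R * rev_split S1 S2 :> R.
Proof.
move=> opt.
set n1 := (size S1)%:R; set n2 := (size S2)%:R.
set A := fun i j => ind (dist i j < gam * dist i (centroid S1)) .
set B := fun i j => ind (dist i j < gam * dist j  (centroid S2)).
have H : \sum_(i <- S1) \sum_(j <- S2) (gam - gam * A i j - gam * B i j) <= rev_split S1 S2.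
  by apply: ler_sum => i _; apply: ler_sum => j _; apply: rev_lb.
have E : \sum_(i <- S1) \sum_(j <- S2) (gam - gam * A i j - gam * B i j) =
   n1 * n2 * gam - gam * \sum_(i <- S1) \sum_(j <- S2) A i j
                 - gam * \sum_(i <- S1) \sum_(j <- S2) B i j.
  rewrite (eq_bigr (fun i => n2 * gam - gam * \sum_(j <- S2) A i j - gam * \sum_(j <- S2) B i j)).
    by rewrite sum_sub3 -!mulr_sumr mulrA.
  by move=> i _; rewrite sum_sub3 -!mulr_sumr.
have HA : 121%:R * \sum_(i <- S1) \sum_(j <- S2) A i j <= 121%:R * (n1 * (40%:R / 121%:R * n2)).
  rewrite ler_pM2l ?ltr0n //; apply: sum_bound => i iS.
  rewrite /A sum_ind.
  have := count_bound opt iS; lra.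
have HB : 121%:R * \sum_(i <- S1) \sum_(j <- S2) B i j <= 121%:R * (n2 * (40%:R / 121%:R * n1)).
  rewrite exchange_big ler_pM2l ?ltr0n //; apply: sum_bound => j jS.
  rewrite /B (eq_bigr (fun i => ind (dist j i < gam * dist j (centroid S2)))); last first.
    by move=> i _; rewrite distC.
  rewrite sum_ind.
  have := count_bound (opt_sym opt) jS; lra.
rewrite E /gam in H.
move: HA HB H.
set XA := \sum_(i <- S1) _; set XB := \sum_(i <- S1) _.
have -> : n2 * (40%:R / 121%:R * n1) = 40%:R / 121%:R * (n1 * n2) by ring.
have -> : n1 * (40%:R / 121%:R * n2) = 40%:R / 121%:R * (n1 * n2) by ring.
set N := n1 * n2.
lra.
Qed.

Lemma rev_split_ub (S1 S2 : seq point) :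
  rev_split S1 S2 <= (size S1)%:R * (size S2)%:R.
Proof.
rewrite /rev_split -sum_cst; apply: ler_sum => i _.
rewrite -[X in _ <= X]mulr1 -sum_cst; apply: ler_sum => j _; exact: rev_le1.
Qed.

Definition pairs (n : nat) : R := n%:R * (n%:R - 1) / 2%:R.

Lemma pairs_ge0 n : 0 <= pairs n.
Proof.
rewrite /pairs; apply: divr_ge0 => //; case: n => [|n]; first by rewrite mul0r.
by rewrite mulr_ge0 // -natr1 addrK.
Qed.

Lemma pairsD n1 n2 : pairs (n1 + n2) = (n1%:R * n2%:R) + pairs n1 + pairs n2.
Proof. rewrite /pairs natrD; by field. Qed.

Lemma hrev_ub (t : htree R m) : hrev t <= pairs (size (leaves t)).
Proof.
elim: t => [x|l IHl r IHr] /=; first by rewrite /pairs subrr mulr0 mul0r.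
rewrite size_cat pairsD; have := rev_split_ub (leaves l) (leaves r); lra.
Qed.

Lemma hrev_lb (t : htree R m) : bisecting_kmeans_tree t ->
  41%:R * pairs (size (leaves t)) <= 1210%:R * hrev t.
Proof.
elim: t => [x|l IHl r IHr] /=; first by move=> _; rewrite /pairs; lra.
move=> [opt [bl br]].
have := rev_split_lb opt; have := IHl bl; have := IHr br.
rewrite size_cat pairsD; lra.
Qed.

End Rev.

Unset Implicit Arguments.

Theorem mainTheorem1 (R : realType) (m : nat) (V : seq 'rV[R]_m)
  (T : htree R m) :
  uniq V -> (2 <= size V)%N ->
  is_hc_tree V T -> bisecting_kmeans_tree T ->
  forall T' : htree R m, is_hc_tree V T' ->
    (35%:R)^-1 * hrev T' <= hrev T.
Proof.
move=> _ _ hT bT T' hT'.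
have h1 := hrev_ub T'; have h2 := hrev_lb bT.
rewrite /is_hc_tree in hT hT'.
rewrite (perm_size hT') in h1; rewrite (perm_size hT) in h2.
have h3 := pairs_ge0 R (size V).
lra.
Qed.
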